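(* Let $n\ge2$, $f\in C^n(\mathbb{R})$ and $\xi\in\mathbb{R}$. Let $2\le\kappa\le n$, let $\alpha=(\alpha_0,\dots,\alpha_\kappa)\in\mathbb{N}_{\ge0}^{\kappa+1}$ with $|\alpha|=\alpha_0+\dots+\alpha_\kappa\le n+1$, and let $(\lambda_0,\dots,\lambda_\kappa)\in\mathbb{R}^{\kappa+1}$ be such that for some $i\ne j$ we have $\lambda_i\ne\lambda_j$ and $\alpha_i,\alpha_j>0$. Then \begin{align*} f[\lambda_i^{(\alpha_i)},\lambda_j^{(\alpha_j)},\widetilde\lambda^{(\widetilde\alpha)}] =&\sum_{l=0}^{\alpha_i-1}\binom{\alpha_j+l-1}{l}\Big(\frac{\lambda_i-\xi}{\lambda_i-\lambda_j}\Big)^{\alpha_j}\Big(\frac{\xi-\lambda_j}{\lambda_i-\lambda_j}\Big)^{l} f[\lambda_i^{(\alpha_i-l)},\xi^{(\alpha_j+l)},\widetilde\lambda^{(\widetilde\alpha)}]\\ &+\sum_{l=0}^{\alpha_j-1}\binom{\alpha_i+l-1}{l}\Big(\frac{\lambda_i-\xi}{\lambda_i-\lambda_j}\Big)^{l}\Big(\frac{\xi-\lambda_j}{\lambda_i-\lambda_j}\Big)^{\alpha_i} f[\xi^{(\alpha_i+l)},\lambda_j^{(\alpha_j-l)},\widetilde\lambda^{(\widetilde\alpha)}], \end{align*} where $\widetilde\lambda^{(\widetilde\alpha)}$ denotes the list of the remaining variables $\lambda_m^{(\alpha_m)}$, $m\in\{0,\dots,\kappa\}\setminus\{i,j\}$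.
   Context: Divided differences: for $f\in C^n(\mathbb{R})$ set $f^{[0]}=f$ and for $1\le k\le n$, $f^{[k]}(\lambda_0,\lambda_1,\lambda)=\frac{f^{[k-1]}(\lambda_0,\lambda)-f^{[k-1]}(\lambda_1,\lambda)}{\lambda_0-\lambda_1}$ if $\lambda_0\ne\lambda_1$, and $=\frac{d}{d\mu}f^{[k-1]}(\mu,\lambda)|_{\mu=\lambda_0}$ if $\lambda_0=\lambda_1$ ($\lambda\in\mathbb{R}^{k-1}$); these are symmetric in their arguments. Notation with repeated variables: for reals $\mu_0,\dots,\mu_m$ and nonnegative integers $\beta_0,\dots,\beta_m$ with $N:=\beta_0+\dots+\beta_m\ge1$, $f[\mu_0^{(\beta_0)},\dots,\mu_m^{(\beta_m)}]:=f^{[N-1]}(\mu_0,\dots,\mu_0,\dots,\mu_m,\dots,\mu_m)$ where $\mu_r$ is repeated $\beta_r$ times (entries with multiplicity $0$ are omitted). *)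

(* Defs.v *)
From Stdlib Require Import Reals Lra Lia List.
From Coquelicot Require Import Coquelicot.
Import ListNotations.
Open Scope R_scope.

Definition Cn (n : nat) (f : R -> R) : Prop :=
  (forall (k : nat) (x : R), (k <= n)%nat -> ex_derive_n f k x) /\
  (forall x : R, continuous (Derive_n f n) x).

(* ddk f k [l0; l1; ...; lk] = f^{[k]}(l0,...,lk), following the recursive
   definition of the paper (recursion removes the second argument). *)
Fixpoint ddk (f : R -> R) (k : nat) (l : list R) : R :=
  match k with
  | O => f (hd 0 l)
  | S k' =>
      match l with
      | a :: b :: rest =>
          if Req_EM_T a b
          then Derive (fun mu => ddk f k' (mu :: rest)) a
          else (ddk f k' (a :: rest) - ddk f k' (b :: rest)) / (a - b)
      | _ => 0
      end
  end.

Definition dd (f : R -> R) (l : list R) : R := ddk f (length l - 1) l.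

Definition rest_list (kappa i j : nat) (lam : nat -> R) (alpha : nat -> nat) : list R :=
  flat_map (fun m => if (Nat.eqb m i || Nat.eqb m j)%bool then []
                     else repeat (lam m) (alpha m)) (seq 0 (S kappa)).

Definition abs_alpha (kappa : nat) (alpha : nat -> nat) : nat :=
  fold_right Nat.add 0%nat (map alpha (seq 0 (S kappa))).

(* Main.v *)
Require Import Defs.
From Stdlib Require Import Reals List Lra Lia Permutation FunctionalExtensionality.
From Coquelicot Require Import Coquelicot.
Import ListNotations.
Open Scope R_scope.

Definition Dl (c : R) (g : R -> R) (y : R) : R := ddk g 1 [y; c].

Lemma ddk_S f k a b rest : ddk f (S k) (a :: b :: rest) =
  if Req_EM_T a b then Derive (fun mu => ddk f k (mu :: rest)) a
  else (ddk f k (a :: rest) - ddk f k (b :: rest)) / (a - b).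
Proof. reflexivity. Qed.

Lemma Dl_eq c g y : Dl c g y = if Req_EM_T y c then Derive g y else (g y - g c) / (y - c).
Proof. reflexivity. Qed.

Lemma peel : forall m f l c, length l = S m -> ddk f (S m) (l ++ [c]) = ddk (Dl c f) m l.
Proof.
  induction m; intros f l c Hl.
  - destruct l as [|x [|? ?]]; simpl in Hl; try lia. reflexivity.
  - destruct l as [|a [|b rest]]; simpl in Hl; try lia.
    change ((a :: b :: rest) ++ [c]) with (a :: b :: (rest ++ [c])).
    rewrite !ddk_S. destruct (Req_EM_T a b).
    + apply Derive_ext. intro mu. apply (IHm f (mu :: rest)). simpl; lia.
    + pose proof (IHm f (a :: rest) c) as H1. pose proof (IHm f (b :: rest) c) as H2.
      cbn [app] in H1, H2. rewrite H1, H2 by (simpl; lia). reflexivity.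
Qed.

Lemma swap01 f k a b rest : ddk f (S k) (a :: b :: rest) = ddk f (S k) (b :: a :: rest).
Proof.
  rewrite !ddk_S. destruct (Req_EM_T a b), (Req_EM_T b a); subst; try congruence.
  field. split; intro H; [apply n0|apply n]; lra.
Qed.

Fixpoint Dls (l2 : list R) (f : R -> R) : R -> R :=
  match l2 with [] => f | c :: l2' => Dl c (Dls l2' f) end.

Lemma ball_neq (x y : R) : x <> y -> locally x (fun t : R => t <> y).
Proof.
  intro H. assert (Hp : 0 < Rabs (x - y)) by (apply Rabs_pos_lt; lra).
  exists (mkposreal _ Hp). intros t Ht. unfold ball in Ht; simpl in Ht.
  unfold AbsRing_ball, abs, minus, plus, opp in Ht; simpl in Ht.
  intro E; subst. replace (y + - x) with (- (x - y)) in Ht by ring.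
  rewrite Rabs_Ropp in Ht. lra.
Qed.

Lemma deriv_Dl g x y : x <> y -> ex_derive g x ->
  Derive (Dl y g) x = (Derive g x * (x - y) - (g x - g y)) / (x - y) ^ 2.
Proof.
  intros Hxy Hg. apply is_derive_unique.
  apply (is_derive_ext_loc (fun mu => (g mu - g y) / (mu - y))).
  - generalize (ball_neq x y Hxy). apply filter_imp. intros t Ht.
    rewrite Dl_eq. destruct (Req_EM_T t y); congruence.
  - auto_derive.
    + split; auto. lra.
    + change (Derive (fun t => g t) x) with (Derive g x). field. lra.
Qed.

Lemma Dl_comm g x y : ex_derive g x -> ex_derive g y ->
  forall z, Dl x (Dl y g) z = Dl y (Dl x g) z.
Proof.
  intros Hx Hy z. destruct (Req_EM_T x y) as [->|Hxy]; [reflexivity|].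
  rewrite !(Dl_eq _ _ z).
  destruct (Req_EM_T z x) as [Ezx|Hzx]; destruct (Req_EM_T z y) as [Ezy|Hzy].
  - congruence.
  - subst z. rewrite deriv_Dl by auto. rewrite !Dl_eq.
    destruct (Req_EM_T x x); [|congruence]. destruct (Req_EM_T y x); [congruence|].
    field. split; lra.
  - subst z. rewrite deriv_Dl by auto. rewrite !Dl_eq.
    destruct (Req_EM_T y y); [|congruence]. destruct (Req_EM_T x y); [congruence|].
    field. split; lra.
  - rewrite !Dl_eq.
    destruct (Req_EM_T z y); [congruence|]. destruct (Req_EM_T x y); [congruence|].
    destruct (Req_EM_T z x); [congruence|]. destruct (Req_EM_T y x); [congruence|].
    field. repeat split; lra.
Qed.

Lemma peels : forall l2 k f l, length l = S k ->
  ddk f (k + length l2) (l ++ l2) = ddk (Dls l2 f) k l.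
Proof.
  induction l2 as [|c l2 IH]; intros k f l Hl.
  - simpl. rewrite app_nil_r, Nat.add_0_r. reflexivity.
  - simpl length. replace (k + S (length l2))%nat with (S k + length l2)%nat by lia.
    replace (l ++ c :: l2) with ((l ++ [c]) ++ l2) by (rewrite <- app_assoc; reflexivity).
    rewrite IH by (rewrite length_app; simpl; lia).
    simpl Dls. rewrite peel by auto. reflexivity.
Qed.

Lemma dd_eq f l : dd f l = ddk f (length l - 1) l.
Proof. reflexivity. Qed.

Lemma dd_perm f N : (forall l2 x, (length l2 + 3 <= N)%nat -> ex_derive (Dls l2 f) x) ->
  forall l l', Permutation l l' -> (length l <= N)%nat -> dd f l = dd f l'.
Proof.
  intros HD l l' HP.
  apply (Permutation_ind_transp (fun l l' => (length l <= N)%nat -> dd f l = dd f l'));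
    auto.
  - intros x y l1 l2 Hlen.
    destruct l1 as [|w l1'].
    + simpl app. rewrite !dd_eq. simpl length.
      replace (S (S (length l2)) - 1)%nat with (S (length l2)) by lia.
      apply swap01.
    + assert (E : forall a b, dd f ((w :: l1') ++ a :: b :: l2) =
                 ddk (Dl a (Dl b (Dls l2 f))) (length l1') (w :: l1')).
      { intros a b. rewrite dd_eq.
        replace ((w :: l1') ++ a :: b :: l2) with (((w :: l1') ++ [a; b]) ++ l2)
          by (rewrite <- app_assoc; reflexivity).
        replace (length (((w :: l1') ++ [a; b]) ++ l2) - 1)%nat
          with (S (S (length l1')) + length l2)%nat
          by (rewrite !length_app; simpl; lia).
        rewrite peels by (rewrite length_app; simpl; lia).
        replace ((w :: l1') ++ [a; b]) with (((w :: l1') ++ [a]) ++ [b])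
          by (rewrite <- app_assoc; reflexivity).
        rewrite peel by (rewrite length_app; simpl; lia).
        rewrite peel by (simpl; lia). reflexivity. }
      rewrite !E. f_equal. apply functional_extensionality. intro z.
      rewrite length_app in Hlen. simpl in Hlen.
      apply Dl_comm; apply HD; lia.
  - intros l0 l1 l2 P1 H1 P2 H2 Hl. rewrite H1 by auto. apply H2.
    rewrite <- (Permutation_length P1). auto.
Qed.
Lemma cpt_of_der (f : R -> R) x : ex_derive f x -> continuity_pt f x.
Proof. intro H. apply continuity_pt_filterlim. exact (ex_derive_continuous f x H). Qed.

Lemma cont_of_der (f : R -> R) (x : R) : ex_derive f x -> continuous f x.
Proof. intro H. exact (ex_derive_continuous f x H). Qed.

Lemma cont2d_phi (K : R -> R) c m : (forall x, continuous K x) ->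
  forall u v, continuity_2d_pt (fun u v => v ^ m * K (c + v * (u - c))) u v.
Proof.
  intros HK u v. apply continuity_2d_pt_mult.
  - apply (continuity_1d_2d_pt_comp (fun v => v ^ m) (fun u v => v)).
    + apply cpt_of_der. auto_derive. auto.
    + apply continuity_2d_pt_id2.
  - apply (continuity_1d_2d_pt_comp K (fun u v => c + v * (u - c))).
    + apply continuity_pt_filterlim. apply HK.
    + apply continuity_2d_pt_plus. apply continuity_2d_pt_const.
      apply continuity_2d_pt_mult. apply continuity_2d_pt_id2.
      apply continuity_2d_pt_minus. apply continuity_2d_pt_id1. apply continuity_2d_pt_const.
Qed.

Lemma ex_RInt_phi (K : R -> R) c m y : (forall x, continuous K x) ->
  ex_RInt (fun s => s ^ m * K (c + s * (y - c))) 0 1.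
Proof.
  intro HK. apply (ex_RInt_continuous (V := R_CompleteNormedModule)). intros s _.
  apply (continuous_mult (fun s => s ^ m) (fun s => K (c + s * (y - c)))).
  - apply cont_of_der. auto_derive. auto.
  - apply (continuous_comp (fun s => c + s * (y - c)) K).
    + apply cont_of_der. auto_derive. auto.
    + apply HK.
Qed.

Lemma cont_param (K : R -> R) c m : (forall x, continuous K x) ->
  forall y0, continuous (fun y => RInt (fun s => s ^ m * K (c + s * (y - c))) 0 1) y0.
Proof.
  intros HK y0. apply continuity_pt_filterlim. intros eps Heps.
  assert (He2 : 0 < eps / 2) by lra.
  destruct (uniform_continuity_2d (fun u v => v ^ m * K (c + v * (u - c))) (y0 - 1) (y0 + 1) 0 1
     (fun x y _ _ => cont2d_phi K c m HK x y) (mkposreal _ He2)) as [d Hd].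
  exists (Rmin d 1). split. { apply Rmin_pos; [apply cond_pos | lra]. }
  intros y [_ Hy]. simpl in Hy |- *. unfold R_dist in Hy |- *.
  assert (Hy1 : Rabs (y - y0) < d) by (eapply Rlt_le_trans; [exact Hy| apply Rmin_l]).
  assert (Hy2 : Rabs (y - y0) < 1) by (eapply Rlt_le_trans; [exact Hy| apply Rmin_r]).
  assert (E : RInt (fun s => s ^ m * K (c + s * (y - c))) 0 1 -
              RInt (fun s => s ^ m * K (c + s * (y0 - c))) 0 1 =
              RInt (fun s => s ^ m * K (c + s * (y - c)) - s ^ m * K (c + s * (y0 - c))) 0 1).
  { symmetry. apply (RInt_minus (V := R_CompleteNormedModule)); apply ex_RInt_phi; auto. }
  rewrite E.
  apply Rle_lt_trans with ((1 - 0) * (eps / 2)); [|lra].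
  apply abs_RInt_le_const; [lra| |].
  - apply (ex_RInt_minus (V := R_CompleteNormedModule)); apply ex_RInt_phi; auto.
  - intros t Ht. left. apply (Hd y0 t y t).
    + lra.
    + lra.
    + apply Rabs_def2 in Hy2. lra.
    + lra.
    + auto.
    + replace (t - t) with 0 by ring. rewrite Rabs_R0. apply cond_pos.
Qed.

Lemma deriv_param (h : R -> R) c m : (forall x, ex_derive h x) ->
  (forall x, continuous (Derive h) x) -> forall y,
  is_derive (fun y => RInt (fun s => s ^ m * h (c + s * (y - c))) 0 1) y
            (RInt (fun s => s ^ (S m) * Derive h (c + s * (y - c))) 0 1).
Proof.
  intros Hd Hc y.
  assert (ED : forall u v, Derive (fun z => v ^ m * h (c + v * (z - c))) u
                         = v ^ (S m) * Derive h (c + v * (u - c))).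
  { intros u v. apply is_derive_unique. auto_derive. apply Hd. simpl. change (Derive (fun x => h x)) with (Derive h). replace (u + - c) with (u - c) by ring. ring. }
  replace (RInt (fun s => s ^ (S m) * Derive h (c + s * (y - c))) 0 1)
    with (RInt (fun t => Derive (fun u => t ^ m * h (c + t * (u - c))) y) 0 1)
    by (apply RInt_ext; intros; apply ED).
  apply (is_derive_RInt_param (fun u t => t ^ m * h (c + t * (u - c))) 0 1 y).
  - apply filter_forall. intros x t _. auto_derive. apply Hd.
  - intros t _. apply continuity_2d_pt_ext with
      (f := fun u v => v ^ (S m) * Derive h (c + v * (u - c))).
    { intros; symmetry; apply ED. }
    apply cont2d_phi. auto.
  - apply filter_forall. intros x. apply ex_RInt_phi.
    intro z. apply cont_of_der. apply Hd.
Qed.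

Lemma Dl_int g c : (forall x, ex_derive g x) -> (forall x, continuous (Derive g) x) ->
  forall y, Dl c g y = RInt (fun s => s ^ 0 * Derive g (c + s * (y - c))) 0 1.
Proof.
  intros Hd Hc y. rewrite Dl_eq. destruct (Req_EM_T y c) as [->|Hyc].
  - rewrite (RInt_ext _ (fun _ => Derive g c)).
    + rewrite RInt_const. unfold scal; simpl; unfold mult; simpl. ring.
    + intros x _. simpl. replace (c + x * (c - c)) with c by ring. ring.
  - assert (FTC : RInt (Derive g) c y = g y - g c).
    { apply RInt_Derive; intros; auto. }
    assert (CL : RInt (fun s => scal (y - c) (Derive g ((y - c) * s + c))) 0 1
                 = RInt (Derive g) ((y - c) * 0 + c) ((y - c) * 1 + c)).
    { apply (RInt_comp_lin (V := R_CompleteNormedModule)).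
      apply (ex_RInt_continuous (V := R_CompleteNormedModule)). intros; auto. }
    replace ((y - c) * 0 + c) with c in CL by ring.
    replace ((y - c) * 1 + c) with y in CL by ring.
    rewrite (RInt_ext _ (fun s => scal (y - c) (s ^ 0 * Derive g (c + s * (y - c))))) in CL.
    2:{ intros x _. unfold scal; simpl; unfold mult; simpl.
        replace ((y - c) * x + c) with (c + x * (y - c)) by ring. ring. }
    rewrite (RInt_scal (V := R_CompleteNormedModule)) in CL.
    2:{ apply ex_RInt_phi. auto. }
    unfold scal in CL; simpl in CL; unfold mult in CL; simpl in CL.
    assert (Hfin : (y - c) * RInt (fun s => s ^ 0 * Derive g (c + s * (y - c))) 0 1 = g y - g c) by (rewrite <- FTC; exact CL). rewrite <- Hfin. field. lra.
Qed.

Lemma Cn_Dl p g c : Cn (S p) g -> Cn p (Dl c g).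
Proof.
  intros [Hex Hcont].
  assert (CD : forall k x, (k <= S p)%nat -> continuous (Derive_n g k) x).
  { intros k x Hk. destruct (Nat.eq_dec k (S p)) as [->|Hne]; [apply Hcont|].
    apply cont_of_der. exact (Hex (S k) x ltac:(lia)). }
  set (J := fun k y => RInt (fun s => s ^ k * Derive_n g (S k) (c + s * (y - c))) 0 1).
  assert (DJ : forall k, (S k <= p)%nat -> forall y, is_derive (J k) y (J (S k) y)).
  { intros k Hk y. unfold J. apply (deriv_param (Derive_n g (S k)) c k).
    - intro x. exact (Hex (S (S k)) x ltac:(lia)).
    - intro x. exact (CD (S (S k)) x ltac:(lia)). }
  assert (KEY : forall k, (k <= p)%nat -> forall y, Derive_n (Dl c g) k y = J k y).
  { induction k; intros Hk y.
    - simpl. rewrite (Dl_int g c).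
      + unfold J. apply RInt_ext. intros. reflexivity.
      + intro x. exact (Hex 1%nat x ltac:(lia)).
      + intro x. exact (CD 1%nat x ltac:(lia)).
    - simpl Derive_n. rewrite (Derive_ext _ (J k)) by (intros; apply IHk; lia).
      apply is_derive_unique. apply DJ. lia. }
  split.
  - intros k x Hk. destruct k as [|k]; [simpl; auto|].
    simpl ex_derive_n. apply (ex_derive_ext (J k)).
    + intros; symmetry; apply KEY; lia.
    + eexists. apply DJ. lia.
  - intro x. apply (continuous_ext (J p)).
    + intros; symmetry; apply KEY; lia.
    + unfold J. apply cont_param. intros; apply Hcont.
Qed.

Lemma Cn_Dls n f : Cn n f -> forall l2, (length l2 <= n)%nat -> Cn (n - length l2) (Dls l2 f).
Proof.
  intros Hf l2. induction l2 as [|c l2 IH]; intros Hl.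
  - simpl. rewrite Nat.sub_0_r. auto.
  - simpl in Hl |- *. apply Cn_Dl.
    replace (S (n - S (length l2))) with (n - length l2)%nat by lia. apply IH. lia.
Qed.

Lemma dd_perm_Cn n f : Cn n f ->
  forall l l', Permutation l l' -> (length l <= S n)%nat -> dd f l = dd f l'.
Proof.
  intro Hf. apply dd_perm. intros l2 x Hl.
  destruct (Cn_Dls n f Hf l2 ltac:(lia)) as [Hex _].
  exact (Hex 1%nat x ltac:(lia)).
Qed.
Fixpoint sumf (g : nat -> R) (m : nat) : R :=
  match m with O => 0 | S m' => sumf g m' + g m' end.

Lemma sumf_shift g m : sumf g (S m) = g O + sumf (fun l => g (S l)) m.
Proof. induction m; simpl in *; [ring|]. rewrite IHm. ring. Qed.

Lemma sumf_ext g h m : (forall l, (l < m)%nat -> g l = h l) -> sumf g m = sumf h m.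
Proof. induction m; intro H; simpl; auto. rewrite IHm by (intros; apply H; lia). rewrite H by lia. reflexivity. Qed.

Lemma sumf_lin a b g h m : a * sumf g m + b * sumf h m = sumf (fun l => a * g l + b * h l) m.
Proof. induction m; simpl; [ring|]. rewrite <- IHm. ring. Qed.

Lemma sumf_zero g m : (forall l, (l < m)%nat -> g l = 0) -> sumf g m = 0.
Proof. induction m; intro H; simpl; auto. rewrite IHm by (intros; apply H; lia). rewrite H by lia. ring. Qed.

Lemma sum_n_sumf g m : sum_n g m = sumf g (S m).
Proof.
  induction m. { rewrite sum_O. simpl. symmetry; apply Rplus_0_l. }
  rewrite sum_Sn, IHm. reflexivity.
Qed.

Fixpoint bin (n k : nat) : nat :=
  match n, k with
  | _, O => 1%nat
  | O, S _ => 0%nat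
  | S n', S k' => (bin n' k' + bin n' (S k'))%nat
  end.

Lemma bin0 n : bin n 0 = 1%nat. Proof. destruct n; reflexivity. Qed.
Lemma binS n k : bin (S n) (S k) = (bin n k + bin n (S k))%nat. Proof. reflexivity. Qed.
Lemma bin_gt : forall n k, (n < k)%nat -> bin n k = 0%nat.
Proof.
  induction n; intros k H; destruct k; try lia; simpl; auto.
  rewrite !IHn by lia. reflexivity.
Qed.
Lemma bin_diag : forall n, bin n n = 1%nat.
Proof. induction n; simpl; auto. rewrite IHn, bin_gt by lia. reflexivity. Qed.

Lemma C_bin : forall n k, (k <= n)%nat -> Binomial.C n k = INR (bin n k).
Proof.
  induction n; intros k Hk.
  - destruct k; [|lia]. rewrite C_n_0. reflexivity.
  - destruct k. { rewrite C_n_0, bin0. reflexivity. }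
    destruct (Nat.eq_dec k n) as [->|Hne].
    + rewrite C_n_n, bin_diag. reflexivity.
    + rewrite <- pascal by lia. rewrite binS, plus_INR, !IHn by lia. reflexivity.
Qed.

Definition S1 (a b : R) (B : nat -> R) (s t : nat) : R :=
  sumf (fun l => INR (bin (t + l - 1) l) * a ^ t * b ^ l * B (s - l)%nat) s.

Lemma S1_rec a b B s t : S1 a b B (S s) (S t) = a * S1 a b B (S s) t + b * S1 a b B s (S t).
Proof.
  unfold S1. rewrite !(sumf_shift _ s).
  rewrite Rmult_plus_distr_l, Rplus_assoc. f_equal.
  - replace (S t + 0 - 1)%nat with t by lia. rewrite !bin0. simpl. ring.
  - rewrite sumf_lin. apply sumf_ext. intros l Hl.
    replace (S t + S l - 1)%nat with (S (t + l)) by lia.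
    replace (t + S l - 1)%nat with (t + l)%nat by lia.
    replace (S t + l - 1)%nat with (t + l)%nat by lia.
    rewrite binS, plus_INR. simpl. ring.
Qed.

Lemma S1_t0 a b B s : S1 a b B (S s) 0 = B (S s).
Proof.
  unfold S1. rewrite sumf_shift. rewrite sumf_zero.
  - simpl. ring.
  - intros l Hl. replace (0 + S l - 1)%nat with l by lia. rewrite bin_gt by lia. simpl. ring.
Qed.

Lemma S1_s0 a b B t : S1 a b B 0 t = 0.
Proof. reflexivity. Qed.

Definition G a b B1 B2 s t := S1 a b B1 s t + S1 b a B2 t s.

Lemma grid (F : nat -> nat -> R) (T : nat) a b :
  (forall s t, (S s + S t <= T)%nat -> F (S s) (S t) = a * F (S s) t + b * F s (S t)) ->
  forall s t, (s + t <= T)%nat -> (1 <= s + t)%nat ->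
  F s t = G a b (fun i => F i O) (fun j => F O j) s t.
Proof.
  intros HF. intros s t. remember (s + t)%nat as N. revert s t HeqN.
  induction N; intros s t HN HT H1; [lia|].
  destruct s as [|s]; destruct t as [|t]; try lia.
  - unfold G. rewrite S1_s0, S1_t0. ring.
  - unfold G. rewrite S1_s0, S1_t0. ring.
  - rewrite HF by lia. unfold G.
    rewrite S1_rec, (S1_rec b a).
    rewrite (IHN (S s) t), (IHN s (S t)) by lia. unfold G. ring.
Qed.

Lemma crep (y x : R) k : count_occ Req_EM_T (repeat y k) x = if Req_EM_T y x then k else 0%nat.
Proof. induction k; simpl; destruct (Req_EM_T y x); auto. Qed.

Lemma ccons (a x : R) l : count_occ Req_EM_T (a :: l) x =
  ((if Req_EM_T a x then 1 else 0) + count_occ Req_EM_T l x)%nat.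
Proof. simpl. destruct (Req_EM_T a x); reflexivity. Qed.

Ltac perm_solve :=
  apply (Permutation_count_occ Req_EM_T); intro x0;
  repeat rewrite ?count_occ_app, ?ccons, ?crep;
  repeat match goal with |- context [Req_EM_T ?a ?b] => destruct (Req_EM_T a b) end;
  try congruence; lia.

Lemma dd_cons2 f a b X : a <> b ->
  dd f (a :: b :: X) = (dd f (a :: X) - dd f (b :: X)) / (a - b).
Proof.
  intro H. rewrite !dd_eq. simpl length.
  replace (S (S (length X)) - 1)%nat with (S (length X)) by lia.
  replace (S (length X) - 1)%nat with (length X) by lia.
  rewrite ddk_S. destruct (Req_EM_T a b); [congruence|reflexivity].
Qed.

Definition FF f P Q xi R T s t :=
  dd f (repeat P s ++ repeat Q t ++ repeat xi (T - s - t) ++ R).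

Lemma step n f P Q xi R T : Cn n f -> P <> Q -> (T + length R <= S n)%nat ->
  forall s t, (S s + S t <= T)%nat ->
  FF f P Q xi R T (S s) (S t) =
    (P - xi) / (P - Q) * FF f P Q xi R T (S s) t + (xi - Q) / (P - Q) * FF f P Q xi R T s (S t).
Proof.
  intros Hf HPQ HT s t Hst. unfold FF.
  set (u := (T - S s - S t)%nat).
  replace (T - S s - t)%nat with (S u) by (unfold u; lia).
  replace (T - s - S t)%nat with (S u) by (unfold u; lia).
  set (X := repeat P s ++ repeat Q t ++ repeat xi u ++ R).
  assert (HX : (length X + 2 <= S n)%nat).
  { unfold X. rewrite !length_app, !repeat_length. unfold u. lia. }
  assert (L : forall Y, Permutation Y (P :: Q :: X) ->
              dd f Y = dd f (P :: Q :: X)) by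
    (intros Y HY; apply (dd_perm_Cn n f Hf); auto; rewrite (Permutation_length HY); simpl; lia).
  destruct (Req_EM_T xi P) as [EP|NP].
  - subst xi. replace ((P - P) / (P - Q)) with 0 by (field; lra).
    replace ((P - Q) / (P - Q)) with 1 by (field; lra).
    rewrite (L (repeat P s ++ _)) by (unfold X; perm_solve).
    rewrite (L (repeat P (S s) ++ _)) by (unfold X; perm_solve). ring.
  - destruct (Req_EM_T xi Q) as [EQ|NQ].
    + subst xi. replace ((Q - Q) / (P - Q)) with 0 by (field; lra).
      replace ((P - Q) / (P - Q)) with 1 by (field; lra).
      rewrite (L (repeat P (S s) ++ repeat Q t ++ _)) by (unfold X; perm_solve).
      rewrite (L (repeat P (S s) ++ repeat Q (S t) ++ _)) by (unfold X; perm_solve). ring.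
    + rewrite (L (repeat P (S s) ++ repeat Q (S t) ++ _)) by (unfold X; perm_solve).
      rewrite (dd_perm_Cn n f Hf (repeat P (S s) ++ repeat Q t ++ _) (P :: xi :: X))
        by (unfold X; first [rewrite !length_app, !repeat_length; unfold u; lia | perm_solve]).
      rewrite (dd_perm_Cn n f Hf (repeat P s ++ repeat Q (S t) ++ _) (xi :: Q :: X))
        by (unfold X; first [rewrite !length_app, !repeat_length; unfold u; lia | perm_solve]).
      rewrite !dd_cons2 by auto.
      field. repeat split; intro; apply NP + apply NQ + apply HPQ; lra.
Qed.

Lemma rest_len_gen i j (lam : nat -> R) (alpha : nat -> nat) : i <> j -> forall L,
  (length (flat_map (fun m => if (Nat.eqb m i || Nat.eqb m j)%bool then []
                     else repeat (lam m) (alpha m)) L)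
   + count_occ Nat.eq_dec L i * alpha i + count_occ Nat.eq_dec L j * alpha j
   = fold_right Nat.add 0 (map alpha L))%nat.
Proof.
  intros Hij L. induction L as [|m L IH]; simpl; auto.
  rewrite length_app.
  destruct (Nat.eq_dec m i); destruct (Nat.eq_dec m j);
  destruct (Nat.eqb_spec m i); destruct (Nat.eqb_spec m j); subst; simpl;
  try rewrite repeat_length; try congruence; try lia; nia.
Qed.

Lemma rest_len kappa i j lam alpha : (i <= kappa)%nat -> (j <= kappa)%nat -> i <> j ->
  (length (rest_list kappa i j lam alpha) + alpha i + alpha j = abs_alpha kappa alpha)%nat.
Proof.
  intros Hi Hj Hij. unfold rest_list, abs_alpha.
  rewrite <- (rest_len_gen i j lam alpha Hij).
  assert (ND := seq_NoDup (S kappa) 0).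
  rewrite (proj1 (NoDup_count_occ' Nat.eq_dec _) ND i) by (apply in_seq; lia).
  rewrite (proj1 (NoDup_count_occ' Nat.eq_dec _) ND j) by (apply in_seq; lia).
  lia.
Qed.

Theorem lemma3p1 (n : nat) (f : R -> R) (xi : R) (kappa : nat)
  (alpha : nat -> nat) (lam : nat -> R) (i j : nat) :
  (2 <= n)%nat -> Cn n f ->
  (2 <= kappa)%nat -> (kappa <= n)%nat ->
  (abs_alpha kappa alpha <= S n)%nat ->
  (i <= kappa)%nat -> (j <= kappa)%nat -> i <> j ->
  lam i <> lam j -> (0 < alpha i)%nat -> (0 < alpha j)%nat ->
  let rst := rest_list kappa i j lam alpha in
  let a := (lam i - xi) / (lam i - lam j) in
  let b := (xi - lam j) / (lam i - lam j) in
  dd f (repeat (lam i) (alpha i) ++ repeat (lam j) (alpha j) ++ rst)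
  = sum_n (fun l => Binomial.C (alpha j + l - 1)%nat l * a ^ (alpha j) * b ^ l *
             dd f (repeat (lam i) (alpha i - l)%nat ++ repeat xi (alpha j + l)%nat ++ rst))
          (alpha i - 1)%nat
  + sum_n (fun l => Binomial.C (alpha i + l - 1)%nat l * a ^ l * b ^ (alpha i) *
             dd f (repeat xi (alpha i + l)%nat ++ repeat (lam j) (alpha j - l)%nat ++ rst))
          (alpha j - 1)%nat.
Proof.
  intros Hn Hf Hk Hkn Habs Hi Hj Hij Hlam Hai Haj rst a b.
  assert (HL := rest_len kappa i j lam alpha Hi Hj Hij). fold rst in HL.
  set (P := lam i) in *. set (Q := lam j) in *.
  set (s0 := alpha i) in *. set (t0 := alpha j) in *.
  set (T := (s0 + t0)%nat).
  assert (HT : (T + length rst <= S n)%nat) by (unfold T; lia).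
  pose proof (grid (FF f P Q xi rst T) T a b (step n f P Q xi rst T Hf Hlam HT) s0 t0
                ltac:(unfold T; lia) ltac:(lia)) as HG.
  assert (LHS : dd f (repeat P s0 ++ repeat Q t0 ++ rst) = FF f P Q xi rst T s0 t0).
  { unfold FF. replace (T - s0 - t0)%nat with 0%nat by (unfold T; lia). reflexivity. }
  rewrite LHS, HG. unfold G. f_equal.
  - rewrite sum_n_sumf. replace (S (s0 - 1)) with s0 by lia.
    unfold S1. apply sumf_ext. intros l Hl.
    rewrite C_bin by lia. unfold FF.
    replace (T - (s0 - l) - 0)%nat with (t0 + l)%nat by (unfold T; lia).
    change (repeat Q 0) with (@nil R). rewrite app_nil_l. reflexivity.
  - rewrite sum_n_sumf. replace (S (t0 - 1)) with t0 by lia.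
    unfold S1. apply sumf_ext. intros l Hl.
    rewrite C_bin by lia. unfold FF.
    replace (T - 0 - (t0 - l))%nat with (s0 + l)%nat by (unfold T; lia).
    change (repeat P 0) with (@nil R). rewrite app_nil_l.
    rewrite (dd_perm_Cn n f Hf (repeat Q (t0 - l) ++ repeat xi (s0 + l) ++ rst)
                                (repeat xi (s0 + l) ++ repeat Q (t0 - l) ++ rst)).
    + ring.
    + perm_solve.
    + rewrite !length_app, !repeat_length. lia.
Qed.
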